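(* There exist a ranked alphabet $\Sigma$ and a $(\Sigma,\mathrm{TSR})$-wta $\mathcal{A}$ such that $[\![\mathcal{A}]\!]^{\mathrm{init}}$ is i-recognizable by a crisp-deterministic $(\Sigma,\mathrm{TSR})$-wta and $\mathcal{N}(\mathcal{A})$ is not finite.
   Context: $\mathrm{TSR}=(\mathbb{N}\cup\{\infty\},\min,+,\infty,0)$ is the tropical semiring (addition $\min$ with neutral element $\infty$, multiplication $+$ with neutral element $0$). A ranked alphabet $\Sigma$ is a finite set of symbols with ranks, $\Sigma^{(k)}$ the symbols of rank $k$, $\Sigma^{(0)}\ne\emptyset$; $T_\Sigma$ is the set of trees. A $(\Sigma,B)$-wta over a strong bimonoid $(B,\oplus,\otimes,\mathbb{0},\mathbb{1})$ is $\mathcal{A}=(Q,\delta,F)$: $Q$ finite nonempty, $\delta_k:Q^k\times\Sigma^{(k)}\times Q\to B$, $F:Q\to B$. Vector algebra $\mathrm{V}(\mathcal{A})=(B^Q,\delta_{\mathcal{A}})$, $\delta_{\mathcal{A}}(\sigma)(v_1,\dots,v_k)_q=\bigoplus_{q_1,\dots,q_k}\big(\bigotimes_{i=1}^k(v_i)_{q_i}\big)\otimes\delta_k(q_1\dots q_k,\sigma,q)$; $h_{\mathrm{V}(\mathcal{A})}:T_\Sigma\to B^Q$ the unique homomorphism; $[\![\mathcal{A}]\!]^{\mathrm{init}}(\xi)=\bigoplus_q h_{\mathrm{V}(\mathcal{A})}(\xi)_q\otimes F_q$; a weighted tree language $r$ is i-recognizable by $\mathcal{A}$ if $r=[\![\mathcal{A}]\!]^{\mathrm{init}}$.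 Crisp-deterministic: for all $k,\sigma\in\Sigma^{(k)},q_1,\dots,q_k$ a unique $q$ with $\delta_k(q_1\dots q_k,\sigma,q)=\mathbb{1}$ and all other values $\mathbb{0}$. The Nerode algebra $\mathcal{N}(\mathcal{A})$ has as carrier the smallest subset of $B^Q$ closed under all operations $\delta_{\mathcal{A}}(\sigma)$ (equivalently $\mathrm{im}(h_{\mathrm{V}(\mathcal{A})})$), with restricted operations and root weights $v\mapsto\bigoplus_q v_q\otimes F_q$; it is finite if this carrier is finite. *)

(* Defs.v *)
From mathcomp Require Import all_boot.
Set Implicit Arguments. Unset Strict Implicit. Unset Printing Implicit Defensive.

(* Tropical semiring TSR = (N ∪ {∞}, min, +, ∞, 0);  carrier: option nat,
   with [None] = ∞ and [Some n] = n. *)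
Definition tnat := option nat.
Definition Inf : tnat := None.
Definition Fin (n : nat) : tnat := Some n.

Definition tmin (a b : tnat) : tnat :=
  match a, b with
  | None, _ => b
  | _, None => a
  | Some x, Some y => Some (minn x y)
  end.

Definition tplus (a b : tnat) : tnat :=
  match a, b with
  | Some x, Some y => Some (x + y)
  | _, _ => None
  end.

Inductive tree (S : finType) (rk : S -> nat) : Type :=
  | Node (s : S) of ('I_(rk s) -> tree rk).

(* A ranked alphabet: S finite, rank function rk, Σ^(0) nonempty. *)
Definition ranked_alphabet (S : finType) (rk : S -> nat) : Prop :=
  exists s : S, rk s = 0.

(* A (Σ,TSR)-wta with state set Q is given by
   delta : forall s, Q^(rk s) -> Q -> tnat   (δ_k(q1..qk, σ, q))
   F : Q -> tnat                              (root weights),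
   with Q finite and nonempty. *)
Section WTA.
Variables (S : finType) (rk : S -> nat) (Q : finType).
Variable delta : forall s : S, {ffun 'I_(rk s) -> Q} -> Q -> tnat.
Variable F : Q -> tnat.

Definition vop (s : S) (vs : 'I_(rk s) -> {ffun Q -> tnat}) : {ffun Q -> tnat} :=
  [ffun q => \big[tmin/Inf]_(w : {ffun 'I_(rk s) -> Q})
               tplus (\big[tplus/Fin 0]_(i < rk s) vs i (w i)) (delta w q)].

Fixpoint hV (t : tree rk) : {ffun Q -> tnat} :=
  match t with
  | Node s ts => vop (fun i => hV (ts i))
  end.

Definition sem_init (t : tree rk) : tnat :=
  \big[tmin/Inf]_(q : Q) tplus (hV t q) (F q).

Definition crisp_deterministic : Prop :=
  forall (s : S) (w : {ffun 'I_(rk s) -> Q}),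
    exists q : Q, delta w q = Fin 0 /\ forall q' : Q, q' <> q -> delta w q' = Inf.

(* the Nerode algebra N(A) is finite: its carrier im(h_V(A)) is finite *)
Definition nerode_finite : Prop :=
  exists l : seq {ffun Q -> tnat}, forall t : tree rk, hV t \in l.
End WTA.

(* Main.v *)
Require Import Defs.
From mathcomp Require Import all_boot.
From HB Require Import structures.
Set Implicit Arguments. Unset Strict Implicit. Unset Printing Implicit Defensive.

Lemma tminA : associative tmin.
Proof. by case=> [x|] [y|] [z|] //=; rewrite minnA. Qed.
Lemma tminC : commutative tmin.
Proof. by case=> [x|] [y|] //=; rewrite minnC. Qed.
Lemma tmin1m : left_id Inf tmin. Proof. by case. Qed.
HB.instance Definition _ := Monoid.isComLaw.Build tnat Inf tmin tminA tminC tmin1m.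

Lemma tplusA : associative tplus.
Proof. by case=> [x|] [y|] [z|] //=; rewrite addnA. Qed.
Lemma tplusC : commutative tplus.
Proof. by case=> [x|] [y|] //=; rewrite addnC. Qed.
Lemma tplus1m : left_id (Fin 0) tplus. Proof. by case. Qed.
HB.instance Definition _ := Monoid.isComLaw.Build tnat (Fin 0) tplus tplusA tplusC tplus1m.

Definition tle (a b : tnat) : bool :=
  match a, b with
  | _, None => true
  | None, Some _ => false
  | Some x, Some y => x <= y
  end.

Lemma bigmin_eq (I : finType) (f : I -> tnat) (j : I) :
  (forall i, tle (f j) (f i)) -> \big[tmin/Inf]_i f i = f j.
Proof.
move=> H; rewrite (bigD1 j) //=.
have : tle (f j) (\big[tmin/Inf]_(i | i != j) f i).
  apply: (big_ind (fun x => tle (f j) x)); first by case: (f j).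
    move=> [x|] [y|] //=; case: (f j) => [z|] //= ; rewrite leq_min => -> ->.
    by [].
  by move=> i _; apply: H.
case: (f j) => [z|]; case: (\big[tmin/Inf]_(i | i != j) f i) => [y|] //=.
by move=> h; rewrite (minn_idPl h).
Qed.

Definition rk (b : bool) : nat := if b then 1 else 0.

Definition leaf : tree rk.
Proof. refine (Node (s:=false) _). move=> [m H]. exfalso. by rewrite /= ltn0 in H. Defined.

Definition gnode (t : tree rk) : tree rk := Node (s:=true) (fun _ => t).

Definition gn (n : nat) : tree rk := iter n gnode leaf.

Definition dl (s : bool) (w : {ffun 'I_(rk s) -> bool}) (q : bool) : tnat :=
  if [forall i, w i == q] then Fin (if q then rk s else 0) else Inf.

Lemma dl_all s (w : {ffun 'I_(rk s) -> bool}) q : (forall k, w k = q) -> dl w q = Fin (if q then rk s else 0).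
Proof. move=> H; rewrite /dl; case: forallP => // h; exfalso; apply: h => i; by rewrite H. Qed.

Definition FF (q : bool) : tnat := if q then Inf else Fin 0.

Definition dl' (s : bool) (w : {ffun 'I_(rk s) -> unit}) (q : unit) : tnat := Fin 0.
Definition FF' (q : unit) : tnat := Fin 0.

Lemma tle0 x : tle (Fin 0) x. Proof. by case: x. Qed.

Lemma hV_false t : hV dl t false = Fin 0.
Proof.
elim: t => s ts IH /=; rewrite /vop ffunE.
have E : forall w : {ffun 'I_(rk s) -> bool}, (forall k, w k = false) ->
   tplus (\big[tplus/Fin 0]_(i < rk s) hV dl (ts i) (w i)) (dl w false) = Fin 0.
  move=> w H; rewrite dl_all // big1 // => k _; by rewrite H IH.
have H0 : forall k, ([ffun=> false] : {ffun 'I_(rk s) -> bool}) k = false by move=> k; rewrite ffunE.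
rewrite (@bigmin_eq _ _ [ffun=> false]) E //.
by move=> i; apply: tle0.
Qed.

Lemma hV' t : hV dl' t tt = Fin 0.
Proof.
elim: t => s ts IH /=; rewrite /vop ffunE.
have E : forall w : {ffun 'I_(rk s) -> unit}, \big[tplus/Fin 0]_(i < rk s) hV dl' (ts i) (w i) = Fin 0.
  by move=> w; apply: big1 => k _; case: (w k); rewrite IH.
rewrite (@bigmin_eq _ _ [ffun=> tt]) E //.
by move=> i; rewrite !E; apply: tle0.
Qed.

Lemma hV_gn n : hV dl (gn n) true = Fin n.
Proof.
elim: n => [|n IH].
  rewrite /= /vop ffunE.
  rewrite (@bigmin_eq _ _ [ffun=> true]) ?big_ord0 //=.
    by rewrite dl_all // => -[].
  by move=> i; rewrite dl_all; [apply: tle0 | case].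
rewrite /= /vop ffunE -/(gn n).
have key : forall w : {ffun 'I_(rk true) -> bool},
  tplus (\big[tplus/Fin 0]_(i < rk true) hV dl (gn n) (w i)) (dl w true)
  = if w ord0 then Fin n.+1 else Inf.
  move=> w; rewrite big_ord1 [dl w true]/dl.
  have -> : [forall i, w i == true] = w ord0.
    apply/forallP/idP => [/(_ ord0)/eqP -> //| h i].
    by rewrite (ord1 i) h.
  case: (w ord0); first by rewrite IH /= addn1.
  by case: (hV dl (gn n) false).
rewrite (@bigmin_eq _ _ [ffun=> true]) key ?ffunE //.
by move=> i; rewrite key; case: (i ord0) => //=.
Qed.

Theorem lemma6p6 :
  exists (S : finType) (rk : S -> nat),
    ranked_alphabet rk /\
    exists (Q : finType) (q0 : Q)
           (delta : forall s : S, {ffun 'I_(rk s) -> Q} -> Q -> tnat)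
           (F : Q -> tnat),
      (exists (Q' : finType) (q0' : Q')
              (delta' : forall s : S, {ffun 'I_(rk s) -> Q'} -> Q' -> tnat)
              (F' : Q' -> tnat),
          crisp_deterministic delta' /\
          forall t : tree rk, sem_init delta F t = sem_init delta' F' t)
      /\ ~ nerode_finite delta.
Proof.
exists bool, rk; split; first by exists false.
exists bool, true, dl, FF; split.
  exists unit, tt, dl', FF'; split.
    by move=> s w; exists tt; split => // -[].
  move=> t; rewrite /sem_init.
  rewrite (@bigmin_eq _ _ false); last by move=> i; rewrite hV_false; apply: tle0.
  rewrite (@bigmin_eq _ _ tt); last by move=> i; rewrite hV'; apply: tle0.
  by rewrite hV_false hV'.
move=> [l Hl].
set s := [seq hV dl (gn n) | n <- iota 0 (size l).+1].
have us : uniq s.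
  rewrite map_inj_in_uniq ?iota_uniq // => m n _ _ E.
  by have := congr1 (fun f : {ffun bool -> tnat} => f true) E; rewrite /= !hV_gn => -[].
have sub : {subset s <= l} by move=> x /mapP [n _ ->]; apply: Hl.
have := uniq_leq_size us sub.
by rewrite size_map size_iota ltnn.
Qed.
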